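(* Let $B$ be the randomized response mechanism $B(y)=|h(y)-(1-V)|$ with $h:\mathbb Y\to\{0,1\}$, $V\sim\mathrm{Bern}(\theta)$, $\theta\in[0,1]$, and let $M=B\circ S$ with $S$ Poisson subsampling of rate $r$. Then for all $x\simeq_{K_+,K_-}x'$, $$\Psi_\alpha(m_x\|m_{x'})\le\max_{\tau\in\{\theta,1-\theta\}}\Psi_\alpha\big((1-w^{(1)})\mathrm{Bern}(\cdot\mid\theta)+w^{(1)}\mathrm{Bern}(\cdot\mid\tau)\ \big\|\ (1-w^{(2)})\mathrm{Bern}(\cdot\mid\theta)+w^{(2)}\mathrm{Bern}(\cdot\mid1-\tau)\big),$$ where $w^{(1)}=1-(1-r)^{K_-}$ and $w^{(2)}=1-(1-r)^{K_+}$.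
   Context: Finite set $\mathbb A$, datasets $x\subseteq\mathbb A$, batches are subsets $y\subseteq x$. Poisson subsampling with rate $r$: $s_x(y)=r^{|y|}(1-r)^{|x|-|y|}$ for $y\subseteq x$; $m_x(z)=\sum_y b_y(z)s_x(y)$ where $b_y$ is the pmf of $B(y)$ on $\{0,1\}$. $\mathrm{Bern}(\cdot\mid p)$ is the pmf on $\{0,1\}$ with mass $p$ at $1$. $x\simeq_{K_+,K_-}x'$ iff $x'=(x\setminus g_-)\cup g_+$ with $g_-\subseteq x$, $|g_-|=K_-$, $g_+\cap x=\emptyset$, $|g_+|=K_+$. For pmfs on $\{0,1\}$: $H_\alpha(p\|q)=\sum_z\max\{p(z)-\alpha q(z),0\}$ ($\alpha\ge0$), $\Lambda_\alpha(p\|q)=\sum_z p(z)^\alpha q(z)^{1-\alpha}$ ($\alpha>1$); $\Psi_\alpha$ is either. *)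

(* Defs.v *)
From HB Require Import structures.
From mathcomp Require Import all_boot all_order all_algebra.
From mathcomp Require Import reals constructive_ereal exp.
Set Implicit Arguments. Unset Strict Implicit. Unset Printing Implicit Defensive.
Import Order.TTheory GRing.Theory Num.Theory.
Local Open Scope ring_scope.

(* pmfs on {0,1} are functions bool -> R (true = 1, false = 0) *)

Definition Bern (R : realType) (p : R) : bool -> R :=
  fun z => if z then p else 1 - p.

(* pmf of the randomized response B(y) = |h(y) - (1 - V)|, V ~ Bern(theta):
   V = 1 gives h(y), V = 0 gives 1 - h(y). [hy] is h(y). *)
Definition rr_pmf (R : realType) (theta : R) (hy : bool) : bool -> R :=
  fun z => theta * (z == hy)%:R + (1 - theta) * (z == ~~ hy)%:R.

Definition poisson_sub (R : realType) (A : finType) (r : R) (x y : {set A}) : R :=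
  if y \subset x then r ^+ #|y| * (1 - r) ^+ (#|x| - #|y|) else 0.

Definition subsampled_pmf (R : realType) (A : finType) (h : {set A} -> bool)
    (theta r : R) (x : {set A}) : bool -> R :=
  fun z => \sum_(y : {set A}) rr_pmf theta (h y) z * poisson_sub r x y.

Definition neighbor (A : finType) (Kp Km : nat) (x x' : {set A}) : Prop :=
  exists gm gp : {set A},
    [/\ gm \subset x, #|gm| = Km, gp :&: x = set0, #|gp| = Kp &
        x' = (x :\: gm) :|: gp].

Definition Hdiv (R : realType) (alpha : R) (p q : bool -> R) : R :=
  \sum_(z : bool) Num.max (p z - alpha * q z) 0.

Definition Lterm (R : realType) (alpha : R) (pz qz : R) : \bar R :=
  if qz == 0 then (if pz == 0 then 0%E else +oo%E)
  else ((pz `^ alpha) * (qz `^ (1 - alpha)))%:E.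

Definition Ldiv (R : realType) (alpha : R) (p q : bool -> R) : \bar R :=
  (\sum_(z : bool) Lterm alpha (p z) (q z))%E.

Definition bmix (R : realType) (w a b : R) : bool -> R :=
  fun z => (1 - w) * Bern a z + w * Bern b z.

(* Main.v *)
Require Import Defs.
From HB Require Import structures.
From mathcomp Require Import all_boot all_order all_algebra.
From mathcomp Require Import reals constructive_ereal exp.
From mathcomp Require Import boolp classical_sets convex hoelder interval_inference.
From mathcomp Require Import ring lra.
Import Order.TTheory GRing.Theory Num.Theory.
Set Implicit Arguments. Unset Strict Implicit. Unset Printing Implicit Defensive.
Local Open Scope ring_scope.

Lemma powR_conv (R : realType) (a l x y : R) : 1 <= a -> 0 <= l -> l <= 1 -> 0 <= x -> 0 <= y ->
  (l * x + (1 - l) * y) `^ a <= l * x `^ a + (1 - l) * y `^ a.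
Proof.
move=> a1 l0 l1 x0 y0.
have := @convex_powR R a a1 (Itv01 l0 l1) x y.
rewrite !inE /= !in_itv /= !andbT => /(_ x0 y0).
by rewrite !convRE /=.
Qed.
Definition gL (R : realType) (a p q : R) : R := q * (p / q) `^ a.

Lemma Lterm_gL (R : realType) (a p q : R) : 1 < a -> 0 <= p -> 0 <= q ->
  (q == 0 -> p == 0) -> Lterm a p q = (gL a p q)%:E.
Proof.
move=> a1 p0 q0 H; rewrite /Lterm /gL.
have [qe|qn0] := eqVneq q 0.
  by rewrite (eqP (H (introT eqP qe))) qe eqxx mul0r.
congr (_%:E).
have qa : 0 < q `^ a by apply: powR_gt0; rewrite lt_neqAle eq_sym qn0.
have e1 : q `^ (1 - a) = q / q `^ a.
  by rewrite powRB ?powRr1 // implybE qn0 orbT.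
have e2 : p `^ a = (p / q) `^ a * q `^ a.
  by rewrite -powRM ?divfK // divr_ge0.
rewrite e1 e2; field; by rewrite gt_eqF.
Qed.

Lemma gL_conv (R : realType) (a l p1 q1 p2 q2 : R) : 1 <= a -> 0 <= l -> l <= 1 ->
  0 <= p1 -> 0 <= q1 -> 0 <= p2 -> 0 <= q2 ->
  (l * q1 = 0 -> l * p1 = 0) -> ((1 - l) * q2 = 0 -> (1 - l) * p2 = 0) ->
  gL a (l * p1 + (1 - l) * p2) (l * q1 + (1 - l) * q2) <=
  l * gL a p1 q1 + (1 - l) * gL a p2 q2.
Proof.
move=> a1 l0 l1 p10 q10 p20 q20 H1 H2; rewrite /gL.
have [e1|n1] := eqVneq (l * q1) 0.
  rewrite e1 (H1 e1) !add0r mulrA e1 mul0r add0r.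
  have [m0|m0] := eqVneq (1 - l) 0; first by rewrite m0 !mul0r.
  by rewrite invfM mulrACA mulfV // mul1r mulrA.
have [e2|n2] := eqVneq ((1 - l) * q2) 0.
  rewrite e2 (H2 e2) !addr0 [X in _ <= _ + X]mulrA e2 mul0r addr0.
  have [m0|m0] := eqVneq l 0; first by rewrite m0 !mul0r.
  by rewrite invfM mulrACA mulfV // mul1r mulrA.
have lq1 : 0 < l * q1 by rewrite lt_neqAle eq_sym n1 mulr_ge0.
have lq2 : 0 < (1 - l) * q2 by rewrite lt_neqAle eq_sym n2 mulr_ge0 // subr_ge0.
have q1n : q1 != 0 by apply: contra n1 => /eqP ->; rewrite mulr0.
have q2n : q2 != 0 by apply: contra n2 => /eqP ->; rewrite mulr0.
set q := l * q1 + (1 - l) * q2.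
have qp : 0 < q by rewrite /q addr_gt0.
set t := l * q1 / q.
have e : (l * p1 + (1 - l) * p2) / q = t * (p1 / q1) + (1 - t) * (p2 / q2).
  by rewrite /t /q; field; rewrite q1n q2n -/q gt_eqF.
rewrite e.
have t0 : 0 <= t by rewrite /t divr_ge0 // ltW.
have t1 : t <= 1 by rewrite /t ler_pdivrMr // mul1r /q lerDl ltW.
apply: (le_trans (ler_wpM2l (ltW qp) (powR_conv a1 t0 t1 _ _))).
- by rewrite divr_ge0.
- by rewrite divr_ge0.
rewrite le_eqVlt; apply/orP; left; apply/eqP.
by rewrite /t /q; field; rewrite -/q gt_eqF.
Qed.

Lemma ge0_nNy (R : realType) (x : \bar R) : (0 <= x)%E -> x != -oo%E.
Proof. by case: x. Qed.

Lemma Lterm_ge0 (R : realType) (a p q : R) : (0 <= Lterm a p q)%E.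
Proof.
rewrite /Lterm; case: ifP => _; first by case: ifP.
by rewrite lee_fin mulr_ge0 // powR_ge0.
Qed.

Lemma Lterm_conv (R : realType) (a l p1 q1 p2 q2 : R) : 1 < a -> 0 <= l -> l <= 1 ->
  0 <= p1 -> 0 <= q1 -> 0 <= p2 -> 0 <= q2 ->
  (Lterm a (l * p1 + (1 - l) * p2) (l * q1 + (1 - l) * q2) <=
   l%:E * Lterm a p1 q1 + (1 - l)%:E * Lterm a p2 q2)%E.
Proof.
move=> a1 l0 l1 p10 q10 p20 q20.
have [->|l0'] := eqVneq l 0.
  by rewrite !mul0r !add0r subr0 !mul1r mul0e add0e mul1e.
have [->|l1'] := eqVneq l 1.
  by rewrite subrr !mul0r !addr0 !mul1r mul0e adde0 mul1e.
have lp : 0 < l by rewrite lt_neqAle eq_sym l0' l0.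
have mp : 0 < 1 - l by rewrite subr_gt0 lt_neqAle l1' l1.
have [/andP[/eqP qe /negPf pn]|A] := boolP ((q1 == 0) && (p1 != 0)).
  rewrite {2}/Lterm qe eqxx pn gt0_muley ?lte_fin // addye ?leey //.
  by apply: ge0_nNy; rewrite mule_ge0 ?Lterm_ge0 // lee_fin ltW.
have [/andP[/eqP qe /negPf pn]|B] := boolP ((q2 == 0) && (p2 != 0)).
  rewrite {3}/Lterm qe eqxx pn gt0_muley ?lte_fin // addey ?leey //.
  by apply: ge0_nNy; rewrite mule_ge0 ?Lterm_ge0 // lee_fin ltW.
have C1 : q1 == 0 -> p1 == 0.
  by move=> qe; move: A; rewrite qe /= negbK.
have C2 : q2 == 0 -> p2 == 0.
  by move=> qe; move: B; rewrite qe /= negbK.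
have lq1 : 0 <= l * q1 by rewrite mulr_ge0.
have mq2 : 0 <= (1 - l) * q2 by rewrite mulr_ge0 // ltW.
rewrite (Lterm_gL a1 p10 q10 C1) (Lterm_gL a1 p20 q20 C2) Lterm_gL //.
2: by rewrite addr_ge0 // mulr_ge0 // ltW.
2: by rewrite addr_ge0.
2: rewrite paddr_eq0 // !mulf_eq0 (negPf l0') (gt_eqF mp) /= => /andP[/C1/eqP -> /C2/eqP ->];
   by rewrite !mulr0 addr0.
rewrite -!EFinM -EFinD lee_fin gL_conv // ?ltW //.
- by move=> /eqP; rewrite mulf_eq0 (negPf l0') /= => /C1/eqP ->; rewrite mulr0.
- by move=> /eqP; rewrite mulf_eq0 (gt_eqF mp) /= => /C2/eqP ->; rewrite mulr0.
Qed.


Definition Hphi (R : realType) (al p q : R) : \bar R := (Num.max (p - al * q) 0)%:E.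

Lemma Hphi_conv (R : realType) (al l p1 q1 p2 q2 : R) : 0 <= l -> l <= 1 ->
  (Hphi al (l * p1 + (1 - l) * p2) (l * q1 + (1 - l) * q2) <=
   l%:E * Hphi al p1 q1 + (1 - l)%:E * Hphi al p2 q2)%E.
Proof.
move=> l0 l1; rewrite /Hphi -!EFinM -EFinD lee_fin.
set m1 := Num.max (p1 - al * q1) 0; set m2 := Num.max (p2 - al * q2) 0.
have h1 : p1 - al * q1 <= m1 by rewrite le_max lexx.
have h2 : p2 - al * q2 <= m2 by rewrite le_max lexx.
have h3 : 0 <= m1 by rewrite le_max lexx orbT.
have h4 : 0 <= m2 by rewrite le_max lexx orbT.
rewrite ge_max; apply/andP; split; last by rewrite addr_ge0 // mulr_ge0 // subr_ge0.
have e : l * p1 + (1 - l) * p2 - al * (l * q1 + (1 - l) * q2) =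
  l * (p1 - al * q1) + (1 - l) * (p2 - al * q2) by ring.
rewrite e lerD // ler_wpM2l // subr_ge0 //.
Qed.

Definition pp (R : realType) (th s : R) : R := (1 - s) * th + s * (1 - th).
Definition FF (R : realType) (Phi : R -> R -> \bar R) (th s t : R) : \bar R :=
  (Phi (pp th s) (pp th t) + Phi (1 - pp th s)%R (1 - pp th t)%R)%E.

Lemma pp_01 (R : realType) (th s : R) : 0 <= th <= 1 -> 0 <= s <= 1 -> 0 <= pp th s <= 1.
Proof. move=> /andP[? ?] /andP[? ?]; rewrite /pp; apply/andP; split; nra. Qed.

Lemma mix_le (R : realType) (M x y : \bar R) (l : R) : 0 <= l -> l <= 1 ->
  (0 <= x -> 0 <= y -> x <= M -> y <= M -> l%:E * x + (1 - l)%:E * y <= M)%E.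
Proof.
move=> l0 l1 x0 y0 xM yM.
have M0 : (0 <= M)%E by apply: le_trans xM.
apply: (@le_trans _ _ (l%:E * M + (1 - l)%:E * M)%E).
  by apply: leeD; apply: lee_wpmul2l; rewrite // lee_fin subr_ge0.
by rewrite -ge0_muleDl ?lee_fin ?subr_ge0 // -EFinD addrC subrK mul1e.
Qed.

Definition HConv (R : realType) (Phi : R -> R -> \bar R) := forall l p1 q1 p2 q2 : R,
  0 <= l -> l <= 1 -> 0 <= p1 <= 1 -> 0 <= q1 <= 1 -> 0 <= p2 <= 1 -> 0 <= q2 <= 1 ->
  (Phi (l * p1 + (1 - l) * p2)%R (l * q1 + (1 - l) * q2)%R <=
   l%:E * Phi p1 q1 + (1 - l)%:E * Phi p2 q2)%E.

Lemma omp_01 (R : realType) (x : R) : 0 <= x <= 1 -> 0 <= 1 - x <= 1.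
Proof. by move=> /andP[? ?]; apply/andP; split; lra. Qed.

Lemma FF_seg (R : realType) (Phi : R -> R -> \bar R) (th l s0 t0 s1 t1 s t : R) (M : \bar R) :
  HConv Phi -> (forall p q, (0 <= Phi p q)%E) -> 0 <= th <= 1 -> 0 <= l -> l <= 1 ->
  0 <= s0 <= 1 -> 0 <= t0 <= 1 -> 0 <= s1 <= 1 -> 0 <= t1 <= 1 ->
  s = l * s0 + (1 - l) * s1 -> t = l * t0 + (1 - l) * t1 ->
  (FF Phi th s0 t0 <= M)%E -> (FF Phi th s1 t1 <= M)%E -> (FF Phi th s t <= M)%E.
Proof.
move=> HC HN th01 l0 l1 s0i t0i s1i t1i -> -> H0 H1.
rewrite /FF.
have e3 : 1 - pp th (l * s0 + (1 - l) * s1) = l * (1 - pp th s0) + (1 - l) * (1 - pp th s1).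
  by rewrite /pp; ring.
have e4 : 1 - pp th (l * t0 + (1 - l) * t1) = l * (1 - pp th t0) + (1 - l) * (1 - pp th t1).
  by rewrite /pp; ring.
have e1 : pp th (l * s0 + (1 - l) * s1) = l * pp th s0 + (1 - l) * pp th s1.
  by rewrite /pp; ring.
have e2 : pp th (l * t0 + (1 - l) * t1) = l * pp th t0 + (1 - l) * pp th t1.
  by rewrite /pp; ring.
rewrite e3 e4 e1 e2.
apply: le_trans; first by apply: leeD; apply: HC; rewrite ?omp_01 ?pp_01.
rewrite addeACA -!ge0_muleDr //; last 1 first.
by apply: mix_le; rewrite ?adde_ge0.
Qed.

Lemma FF_flip (R : realType) (Phi : R -> R -> \bar R) (th s t : R) :
  FF Phi th (1 - s) (1 - t) = FF Phi th s t.
Proof.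
have e : forall v, pp th (1 - v) = 1 - pp th v by move=> v; rewrite /pp; ring.
by rewrite /FF !e !subKr addeC.
Qed.

Lemma cvx01 (R : realType) (c x y : R) : 0 <= c <= 1 -> 0 <= x <= 1 -> 0 <= y <= 1 ->
  0 <= c * x + (1 - c) * y <= 1.
Proof. move=> /andP[? ?] /andP[? ?] /andP[? ?]; apply/andP; split; nra. Qed.

Lemma exist_alpha (R : realType) (c u a : R) : 0 <= c <= 1 -> 0 <= u <= 1 ->
  c * u <= a -> c * (1 - u) <= 1 - a -> exists al, 0 <= al <= 1 /\ a = c * u + (1 - c) * al.
Proof.
move=> /andP[c0 c1] /andP[u0 u1] h1 h2.
have [ce|cn] := eqVneq c 1.
  exists 0; split; first by apply/andP; split; lra.
  rewrite ce in h1 h2 *; lra.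
have cp : 0 < 1 - c by rewrite subr_gt0 lt_neqAle cn c1.
exists ((a - c * u) / (1 - c)); split.
  apply/andP; split; first by rewrite divr_ge0 ?subr_ge0 // ltW.
  by rewrite ler_pdivrMr // mul1r; lra.
by field; rewrite gt_eqF.
Qed.

Lemma FF_main (R : realType) (Phi : R -> R -> \bar R) (th c1 c2 u a b : R) :
  HConv Phi -> (forall p q, (0 <= Phi p q)%E) ->
  (forall p p', 0 <= p <= 1 -> 0 <= p' <= 1 ->
     (Phi p p + Phi (1 - p)%R (1 - p)%R = Phi p' p' + Phi (1 - p')%R (1 - p')%R)%E) ->
  0 <= th <= 1 -> 0 <= c1 <= 1 -> 0 <= c2 <= 1 -> 0 <= u <= 1 ->
  c1 * u <= a -> c1 * (1 - u) <= 1 - a -> c2 * u <= b -> c2 * (1 - u) <= 1 - b ->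
  (FF Phi th a b <= maxe (FF Phi th 0 (1 - c2)) (FF Phi th (1 - c1) 0))%E.
Proof.
move=> HC HN HD th01 c1i c2i ui ha1 ha2 hb1 hb2.
set M := maxe _ _.
have Feq : forall s t s' t', s = s' -> t = t' -> (FF Phi th s' t' <= M)%E ->
    (FF Phi th s t <= M)%E by move=> s t s' t' -> ->.
have i0 : 0 <= (0 : R) <= 1 by apply/andP; split; lra.
have i1 : 0 <= (1 : R) <= 1 by apply/andP; split; lra.
have w1i : 0 <= 1 - c1 <= 1 by apply: omp_01.
have w2i : 0 <= 1 - c2 <= 1 by apply: omp_01.
have V1 : (FF Phi th 0 (1 - c2) <= M)%E by rewrite le_max lexx.
have V2 : (FF Phi th (1 - c1) 0 <= M)%E by rewrite le_max lexx orbT.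
have V3 : (FF Phi th 1 c2 <= M)%E.
  by apply: (Feq _ _ (1 - 0) (1 - (1 - c2))); [rewrite subr0 | rewrite subKr | rewrite FF_flip].
have V4 : (FF Phi th c1 1 <= M)%E.
  by apply: (Feq _ _ (1 - (1 - c1)) (1 - 0)); [rewrite subKr | rewrite subr0 | rewrite FF_flip].
have Vh : (FF Phi th (1/2) (1/2) <= M)%E.
  apply: (FF_seg (l := 1/2) (s0 := 0) (t0 := 1 - c2) (s1 := 1) (t1 := c2)) => //; try lra.
  all: try field.
  all: try (by apply: omp_01).
have Vd : forall s, 0 <= s <= 1 -> (FF Phi th s s <= M)%E.
  move=> s si; rewrite /FF (HD _ (pp th (1/2))); first exact: Vh.
    exact: pp_01.
  by apply: pp_01 => //; apply/andP; split; lra.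
have V5 : (FF Phi th (1 - c1) (1 - c2) <= M)%E.
  have [w10|w1n] := eqVneq (1 - c1) 0; first by rewrite w10.
  move: c1i c2i => /andP[c10 c11] /andP[c20 c21].
  have w1p : 0 < 1 - c1 by rewrite lt_neqAle eq_sym w1n /=; lra.
  set S := 1 - c1 * c2.
  have Sge : 1 - c1 <= S by rewrite /S; nra.
  have Sp : 0 < S by apply: lt_le_trans Sge.
  have Si : 0 <= S <= 1 by apply/andP; split; rewrite /S; nra.
  have VY : (FF Phi th S (1 - c2) <= M)%E.
    apply: (FF_seg (l := c2) (s0 := 1 - c1) (t0 := 0) (s1 := 1) (t1 := 1)) => //;
      rewrite ?/S; try ring; try (by apply/andP; split; lra).
    by apply: Vd.
  have rle : (1 - c1) / S <= 1 by rewrite ler_pdivrMr // mul1r.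
  have rge : 0 <= (1 - c1) / S by rewrite divr_ge0 // ltW.
  apply: (FF_seg (l := 1 - (1 - c1) / S) (s0 := 0) (t0 := 1 - c2) (s1 := S) (t1 := 1 - c2)) => //.
  - by lra.
  - by lra.
  - by field; rewrite gt_eqF.
  - by ring.
have V6 : (FF Phi th c1 c2 <= M)%E.
  by apply: (Feq _ _ (1 - (1 - c1)) (1 - (1 - c2))); [rewrite subKr | rewrite subKr | rewrite FF_flip].
have K1 : forall uu aa bb, (uu = 0 \/ uu = 1) -> (aa = 0 \/ aa = 1) -> 0 <= bb <= 1 ->
    (FF Phi th (c1 * uu + (1 - c1) * aa) (c2 * uu + (1 - c2) * bb) <= M)%E.
  move=> uu aa bb hu ha hb.
  have uui : 0 <= uu <= 1 by case: hu => ->.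
  have aai : 0 <= aa <= 1 by case: ha => ->.
  move: (hb) => /andP[zb0 zb1].
  have l0' : 0 <= 1 - bb by lra.
  have l1' : 1 - bb <= 1 by lra.
  have es : c1 * uu + (1 - c1) * aa =
    (1 - bb) * (c1 * uu + (1 - c1) * aa) + (1 - (1 - bb)) * (c1 * uu + (1 - c1) * aa) by ring.
  have et : c2 * uu + (1 - c2) * bb =
    (1 - bb) * (c2 * uu + (1 - c2) * 0) + (1 - (1 - bb)) * (c2 * uu + (1 - c2) * 1) by ring.
  apply: (FF_seg HC HN th01 l0' l1' (cvx01 c1i uui aai) (cvx01 c2i uui i0)
     (cvx01 c1i uui aai) (cvx01 c2i uui i1) es et).
  - case: hu => ->; case: ha => ->.
    + by apply: (Feq _ _ 0 0); [ring | ring | apply: Vd].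
    + by apply: (Feq _ _ (1 - c1) 0); [ring | ring | exact: V2].
    + by apply: (Feq _ _ c1 c2); [ring | ring | exact: V6].
    + by apply: (Feq _ _ 1 c2); [ring | ring | exact: V3].
  - case: hu => ->; case: ha => ->.
    + by apply: (Feq _ _ 0 (1 - c2)); [ring | ring | exact: V1].
    + by apply: (Feq _ _ (1 - c1) (1 - c2)); [ring | ring | exact: V5].
    + by apply: (Feq _ _ c1 1); [ring | ring | exact: V4].
    + by apply: (Feq _ _ 1 1); [ring | ring | apply: Vd].
have K2 : forall uu aa bb, (uu = 0 \/ uu = 1) -> 0 <= aa <= 1 -> 0 <= bb <= 1 ->
    (FF Phi th (c1 * uu + (1 - c1) * aa) (c2 * uu + (1 - c2) * bb) <= M)%E.
  move=> uu aa bb hu ha hb.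
  have uui : 0 <= uu <= 1 by case: hu => ->.
  move: (ha) => /andP[za0 za1].
  have l0' : 0 <= 1 - aa by lra.
  have l1' : 1 - aa <= 1 by lra.
  have es : c1 * uu + (1 - c1) * aa =
    (1 - aa) * (c1 * uu + (1 - c1) * 0) + (1 - (1 - aa)) * (c1 * uu + (1 - c1) * 1) by ring.
  have et : c2 * uu + (1 - c2) * bb =
    (1 - aa) * (c2 * uu + (1 - c2) * bb) + (1 - (1 - aa)) * (c2 * uu + (1 - c2) * bb) by ring.
  apply: (FF_seg HC HN th01 l0' l1' (cvx01 c1i uui i0) (cvx01 c2i uui hb)
     (cvx01 c1i uui i1) (cvx01 c2i uui hb) es et).
  - by apply: K1 => //; left.
  - by apply: K1 => //; right.
have K3 : forall uu aa bb, 0 <= uu <= 1 -> 0 <= aa <= 1 -> 0 <= bb <= 1 ->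
    (FF Phi th (c1 * uu + (1 - c1) * aa) (c2 * uu + (1 - c2) * bb) <= M)%E.
  move=> uu aa bb hu ha hb.
  move: (hu) => /andP[zu0 zu1].
  have l0' : 0 <= 1 - uu by lra.
  have l1' : 1 - uu <= 1 by lra.
  have es : c1 * uu + (1 - c1) * aa =
    (1 - uu) * (c1 * 0 + (1 - c1) * aa) + (1 - (1 - uu)) * (c1 * 1 + (1 - c1) * aa) by ring.
  have et : c2 * uu + (1 - c2) * bb =
    (1 - uu) * (c2 * 0 + (1 - c2) * bb) + (1 - (1 - uu)) * (c2 * 1 + (1 - c2) * bb) by ring.
  apply: (FF_seg HC HN th01 l0' l1' (cvx01 c1i i0 ha) (cvx01 c2i i0 hb)
     (cvx01 c1i i1 ha) (cvx01 c2i i1 hb) es et).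
  - by apply: K2 => //; left.
  - by apply: K2 => //; right.
have [al [ali ->]] := exist_alpha c1i ui ha1 ha2.
have [be [bei ->]] := exist_alpha c2i ui hb1 hb2.
exact: K3.
Qed.

Lemma ps_ge0 (R : realType) (A : finType) (r : R) (X y : {set A}) :
  0 <= r <= 1 -> 0 <= poisson_sub r X y.
Proof.
move=> /andP[r0 r1]; rewrite /poisson_sub; case: ifP => // _.
by rewrite mulr_ge0 // exprn_ge0 // subr_ge0.
Qed.

Lemma ps_sum (R : realType) (A : finType) (r : R) (X : {set A}) :
  \sum_(y : {set A}) poisson_sub r X y = 1.
Proof.
rewrite /poisson_sub -big_mkcond /=.
rewrite (partition_big (fun y : {set A} => (inord #|y| : 'I_(#|X|).+1)) xpredT) //=.
transitivity (\sum_(j < #|X|.+1) ((1 - r) ^+ (#|X| - j) * r ^+ j) *+ 'C(#|X|, j)).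
  apply: eq_bigr => j _.
  transitivity (\sum_(y in [set y : {set A} | (y \subset X) & #|y| == j])
      r ^+ j * (1 - r) ^+ (#|X| - j)).
    apply: eq_big => y; rewrite ?inE.
      case sub: (y \subset X) => //=.
      by rewrite -val_eqE /= inordK // ltnS subset_leq_card.
    by move=> /andP[sub /eqP <-]; rewrite inordK // ltnS subset_leq_card.
  by rewrite sumr_const cards_draws mulrC.
by rewrite -exprDn subrK expr1n.
Qed.

Lemma ps_bound (R : realType) (A : finType) (r : R) (X0 G : {set A}) (f : {set A} -> R) :
  0 <= r <= 1 -> (forall y, 0 <= f y) -> X0 :&: G = finset.set0 ->
  (1 - r) ^+ #|G| * \sum_(y : {set A}) f y * poisson_sub r X0 y <=
  \sum_(y : {set A}) f y * poisson_sub r (X0 :|: G) y.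
Proof.
move=> r01 f0 dis; rewrite mulr_sumr; apply: ler_sum => y _.
have [hs|nsub] := boolP (y \subset X0); last first.
  rewrite {1}/poisson_sub (negbTE nsub) /= !mulr0.
  by apply: mulr_ge0; [exact: f0 | exact: ps_ge0].
have hs' : y \subset X0 :|: G by exact: (fintype.subset_trans hs (finset.subsetUl _ _)).
rewrite /poisson_sub hs hs' cardsU dis cards0 subn0.
have le : (#|y| <= #|X0|)%N := subset_leq_card hs.
rewrite [(#|X0| + #|G|)%N]addnC -addnBA // exprD.
by rewrite le_eqVlt; apply/orP; left; apply/eqP; ring.
Qed.

Lemma Hphi_diag (R : realType) (al p : R) : 0 <= p <= 1 ->
  (Hphi al p p + Hphi al (1 - p)%R (1 - p)%R = (Num.max (1 - al) 0)%:E)%E.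
Proof.
move=> /andP[p0 p1]; rewrite /Hphi -EFinD; congr (_%:E).
have e : forall v : R, 0 <= v -> Num.max (v - al * v) 0 = v * Num.max (1 - al) 0.
  by move=> v v0; rewrite maxr_pMr // mulr0 mulrBr mulr1 mulrC.
by rewrite !e ?subr_ge0 // -mulrDl addrC subrK mul1r.
Qed.

Lemma Lterm_diag (R : realType) (al p : R) : 1 < al -> 0 <= p ->
  Lterm al p p = p%:E.
Proof.
move=> a1 p0; rewrite /Lterm; have [->|pn] := eqVneq p 0; first by [].
rewrite -powRD; last by rewrite implybE pn orbT.
by rewrite addrC subrK powRr1.
Qed.

Lemma HdivFF (R : realType) (al th s t : R) (p q : bool -> R) :
  p true = pp th s -> p false = 1 - pp th s ->
  q true = pp th t -> q false = 1 - pp th t ->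
  (Hdiv al p q)%:E = FF (Hphi al) th s t.
Proof. by move=> e1 e2 e3 e4; rewrite /Hdiv big_bool /FF /Hphi e1 e2 e3 e4 EFinD. Qed.

Lemma LdivFF (R : realType) (al th s t : R) (p q : bool -> R) :
  p true = pp th s -> p false = 1 - pp th s ->
  q true = pp th t -> q false = 1 - pp th t ->
  Ldiv al p q = FF (Lterm al) th s t.
Proof. by move=> e1 e2 e3 e4; rewrite /Ldiv big_bool /FF e1 e2 e3 e4. Qed.

Definition qf (R : realType) (A : finType) (h : {set A} -> bool) (r : R) (X : {set A}) : R :=
  \sum_(y : {set A}) (~~ h y)%:R * poisson_sub r X y.

Lemma qt_eq (R : realType) (A : finType) (h : {set A} -> bool) (r : R) (X : {set A}) :
  \sum_(y : {set A}) (h y)%:R * poisson_sub r X y = 1 - qf h r X.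
Proof.
have H : \sum_(y : {set A}) (h y)%:R * poisson_sub r X y + qf h r X = 1.
  rewrite /qf -big_split /= -[RHS](ps_sum r X); apply: eq_bigr => y _.
  by case: (h y) => /=; ring.
move: H; set S := (\sum_(y : {set A}) _); move: S => S; lra.
Qed.

Lemma m_true (R : realType) (A : finType) (h : {set A} -> bool) (th r : R) (X : {set A}) :
  subsampled_pmf h th r X true = pp th (qf h r X).
Proof.
have e : forall y, rr_pmf th (h y) true * poisson_sub r X y =
  th * ((h y)%:R * poisson_sub r X y) + (1 - th) * ((~~ h y)%:R * poisson_sub r X y).
  by move=> y; rewrite /rr_pmf; case: (h y) => /=; ring.
rewrite /subsampled_pmf (eq_bigr _ (fun y _ => e y)) big_split /= -!mulr_sumr qt_eq.
by rewrite /pp /qf; ring.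
Qed.

Lemma m_false (R : realType) (A : finType) (h : {set A} -> bool) (th r : R) (X : {set A}) :
  subsampled_pmf h th r X false = 1 - pp th (qf h r X).
Proof.
have e : forall y, rr_pmf th (h y) false * poisson_sub r X y =
  (1 - th) * ((h y)%:R * poisson_sub r X y) + th * ((~~ h y)%:R * poisson_sub r X y).
  by move=> y; rewrite /rr_pmf; case: (h y) => /=; ring.
rewrite /subsampled_pmf (eq_bigr _ (fun y _ => e y)) big_split /= -!mulr_sumr qt_eq.
by rewrite /pp /qf; ring.
Qed.

Theorem mainTheorem8 (R : realType) (A : finType) (h : {set A} -> bool)
    (theta r : R) (Kp Km : nat) (x x' : {set A}) :
  0 <= theta <= 1 -> 0 <= r <= 1 -> neighbor Kp Km x x' ->
  let w1 := 1 - (1 - r) ^+ Km in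
  let w2 := 1 - (1 - r) ^+ Kp in
  let mx := subsampled_pmf h theta r x in
  let mx' := subsampled_pmf h theta r x' in
  (forall alpha : R, 0 <= alpha ->
     Hdiv alpha mx mx' <=
     Num.max (Hdiv alpha (bmix w1 theta theta) (bmix w2 theta (1 - theta)))
             (Hdiv alpha (bmix w1 theta (1 - theta)) (bmix w2 theta (1 - (1 - theta)))))
  /\
  (forall alpha : R, 1 < alpha ->
     (Ldiv alpha mx mx' <=
      maxe (Ldiv alpha (bmix w1 theta theta) (bmix w2 theta (1 - theta)))
           (Ldiv alpha (bmix w1 theta (1 - theta)) (bmix w2 theta (1 - (1 - theta)))))%E).
Proof.
move=> th01 r01 [gm [gp [gmx cgm gpx cgp ->]]] w1 w2 mx mx'.
move: (r01) => /andP[r0 r1].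
set x0 := x :\: gm.
have ex : x = x0 :|: gm.
  apply/setP => z; rewrite !inE; case zg: (z \in gm); rewrite ?orbT ?orbF //=.
  by rewrite (fintype.subsetP gmx).
have d1 : x0 :&: gm = finset.set0.
  by apply/setP => z; rewrite /x0 !inE; case: (z \in gm); rewrite ?andbF.
have d2 : x0 :&: gp = finset.set0.
  apply/setP => z; rewrite /x0 !inE; move/setP: gpx => /(_ z); rewrite !inE.
  by case: (z \in gp); case: (z \in gm); case: (z \in x).
set c1 := (1 - r) ^+ Km.
set c2 := (1 - r) ^+ Kp.
have c1i : 0 <= c1 <= 1 by rewrite exprn_ge0 ?exprn_ile1 ?subr_ge0 //; lra.
have c2i : 0 <= c2 <= 1 by rewrite exprn_ge0 ?exprn_ile1 ?subr_ge0 //; lra.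
have qf0 : forall X, 0 <= qf h r X.
  by move=> X; apply: sumr_ge0 => y _; apply: mulr_ge0; [exact: ler0n | exact: ps_ge0].
have qt0 : forall X, 0 <= 1 - qf h r X.
  by move=> X; rewrite -qt_eq; apply: sumr_ge0 => y _; apply: mulr_ge0; [exact: ler0n | exact: ps_ge0].
have ui : 0 <= qf h r x0 <= 1 by rewrite qf0 /=; have := qt0 x0; lra.
have ha1 : c1 * qf h r x0 <= qf h r x.
  by rewrite /c1 -cgm ex; apply: ps_bound.
have ha2 : c1 * (1 - qf h r x0) <= 1 - qf h r x.
  by rewrite /c1 -cgm -!qt_eq ex; apply: ps_bound.
have hb1 : c2 * qf h r x0 <= qf h r (x0 :|: gp).
  by rewrite /c2 -cgp; apply: ps_bound.
have hb2 : c2 * (1 - qf h r x0) <= 1 - qf h r (x0 :|: gp).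
  by rewrite /c2 -cgp -!qt_eq; apply: ps_bound.
have bm1 : bmix w1 theta theta true = pp theta 0 by rewrite /bmix /Bern /pp; ring.
have bm1' : bmix w1 theta theta false = 1 - pp theta 0 by rewrite /bmix /Bern /pp; ring.
have bm2 : bmix w2 theta (1 - theta) true = pp theta w2 by rewrite /bmix /Bern /pp; ring.
have bm2' : bmix w2 theta (1 - theta) false = 1 - pp theta w2 by rewrite /bmix /Bern /pp; ring.
have bm3 : bmix w1 theta (1 - theta) true = pp theta w1 by rewrite /bmix /Bern /pp; ring.
have bm3' : bmix w1 theta (1 - theta) false = 1 - pp theta w1 by rewrite /bmix /Bern /pp; ring.
have bm4 : bmix w2 theta (1 - (1 - theta)) true = pp theta 0 by rewrite /bmix /Bern /pp; ring.
have bm4' : bmix w2 theta (1 - (1 - theta)) false = 1 - pp theta 0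
  by rewrite /bmix /Bern /pp; ring.
split.
- move=> al al0.
  rewrite -lee_fin EFin_max (HdivFF _ (m_true _ _ _ _) (m_false _ _ _ _)
    (m_true _ _ _ _) (m_false _ _ _ _)).
  rewrite (HdivFF _ bm1 bm1' bm2 bm2') (HdivFF _ bm3 bm3' bm4 bm4').
  apply: (FF_main _ _ _ th01 c1i c2i ui ha1 ha2 hb1 hb2).
  + by move=> l p1 q1 p2 q2 l0 l1 _ _ _ _; apply: Hphi_conv.
  + by move=> p q; rewrite /Hphi lee_fin le_max lexx orbT.
  + by move=> p p' pi p'i; rewrite !Hphi_diag.
- move=> al al1.
  rewrite (LdivFF _ (m_true _ _ _ _) (m_false _ _ _ _)
    (m_true _ _ _ _) (m_false _ _ _ _)).
  rewrite (LdivFF _ bm1 bm1' bm2 bm2') (LdivFF _ bm3 bm3' bm4 bm4').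
  apply: (FF_main _ _ _ th01 c1i c2i ui ha1 ha2 hb1 hb2).
  + move=> l p1 q1 p2 q2 l0 l1 /andP[? _] /andP[? _] /andP[? _] /andP[? _].
    exact: Lterm_conv.
  + by move=> p q; apply: Lterm_ge0.
  + move=> p p' /andP[p0 p1] /andP[p'0 p'1].
    by rewrite !Lterm_diag ?subr_ge0 // -!EFinD !subrKC.
Qed.
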